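(* Let $S^0$ be an adequate semigroup with semilattice of idempotents $E^0$, let $I$ be a left regular band having $E^0$ as a semilattice transversal, and suppose there is a left action $(x,e)\mapsto x\ast e$ of $S^0$ on $I$ (so $(xy)\ast e=x\ast(y\ast e)$) with $x\ast(ef)=(x\ast e)(x\ast f)$ for all $x\in S^0$, $e,f\in I$. Let $W=\{(e,x)\in I\times S^0: e\in L_{x^+}\}$ with multiplication $(e,x)(g,y)=(e(x\ast g),xy)$, and suppose that $x\ast y^+=(xy)^+$ for all $x,y\in S^0$. Then $W$ is a left abundant semigroup and for every $w\in W$ the $\mathcal{R}^\ast$-class of $w$ in $W$ contains exactly one idempotent.
   Context: For a semigroup $T$, $T^1$ is $T$ with an identity adjoined; $a\,\mathcal{R}^\ast\,b$ iff for all $x,y\in T^1$, $xa=ya\Leftrightarrow xb=yb$; $\mathcal{L}^\ast$ is defined dually. $T$ is left abundant if each $\mathcal{R}^\ast$-class contains an idempotent, abundant if also each $\mathcal{L}^\ast$-class does, and adequate if abundant with commuting idempotents; in an adequate semigroup $x^+$ is the unique idempotent $\mathcal{R}^\ast$-related to $x$. A left regular band satisfies $xyx=xy$; $E^0$ is a semilattice transversal of $I$ if $E^0$ is a subsemilattice of $I$ and each element of $I$ has exactly one inverse in $E^0$. For $x\in E^0$, $L_x$ is the $\mathcal{L}$-class of $x$ in $I$. *)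

(* Defs.v *)
(* Generic semigroup notions on a carrier T with
   a binary operation [mul], relativised to a subset [P] (so that a
   subsemigroup given as a predicate can be treated; take P := fun _ => True
   for the whole semigroup). T^1 is modelled by [option T] (None = adjoined 1). *)

Section Gen.
Variable T : Type.
Variable mul : T -> T -> T.

Definition assoc_on (P : T -> Prop) : Prop :=
  forall a b c, P a -> P b -> P c -> mul (mul a b) c = mul a (mul b c).

Definition closed_on (P : T -> Prop) : Prop :=
  forall a b, P a -> P b -> P (mul a b).

Definition lmul1 (x : option T) (a : T) : T :=
  match x with None => a | Some x => mul x a end.
Definition rmul1 (a : T) (x : option T) : T :=
  match x with None => a | Some x => mul a x end.

Definition in1 (P : T -> Prop) (x : option T) : Prop :=
  match x with None => True | Some x => P x end.

Definition idem (e : T) : Prop := mul e e = e.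

Definition Rstar_in (P : T -> Prop) (a b : T) : Prop :=
  forall x y : option T, in1 P x -> in1 P y ->
    (lmul1 x a = lmul1 y a <-> lmul1 x b = lmul1 y b).

Definition Lstar_in (P : T -> Prop) (a b : T) : Prop :=
  forall x y : option T, in1 P x -> in1 P y ->
    (rmul1 a x = rmul1 a y <-> rmul1 b x = rmul1 b y).

Definition left_abundant_in (P : T -> Prop) : Prop :=
  forall a, P a -> exists e, P e /\ idem e /\ Rstar_in P a e.

Definition right_abundant_in (P : T -> Prop) : Prop :=
  forall a, P a -> exists e, P e /\ idem e /\ Lstar_in P a e.

Definition is_semigroup : Prop := forall a b c, mul (mul a b) c = mul a (mul b c).

Definition adequate : Prop :=
  is_semigroup /\ left_abundant_in (fun _ => True) /\
  right_abundant_in (fun _ => True) /\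
  (forall e f, idem e -> idem f -> mul e f = mul f e).

Definition left_regular_band : Prop :=
  is_semigroup /\ (forall x, idem x) /\ (forall x y, mul (mul x y) x = mul x y).

Definition Lrel (a b : T) : Prop :=
  (exists u : option T, a = lmul1 u b) /\ (exists v : option T, b = lmul1 v a).

Definition inverse_of (a b : T) : Prop := mul (mul a b) a = a /\ mul (mul b a) b = b.

End Gen.

(* Main.v *)
Require Import Defs.
From Stdlib Require Import Setoid.

Theorem lemma3p2 (S I : Type) (mulS : S -> S -> S) (mulI : I -> I -> I)
  (plus : S -> S) (emb : S -> I) (act : S -> I -> I)
  (HS : adequate S mulS)
  (Hplus : forall x, idem S mulS (plus x) /\ Rstar_in S mulS (fun _ => True) x (plus x))
  (HI : left_regular_band I mulI)
  (Hemb_hom : forall e f, idem S mulS e -> idem S mulS f ->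
      emb (mulS e f) = mulI (emb e) (emb f))
  (Hemb_inj : forall e f, idem S mulS e -> idem S mulS f -> emb e = emb f -> e = f)
  (Htrans : forall i : I, exists e, idem S mulS e /\ inverse_of I mulI (emb e) i /\
      forall f, idem S mulS f -> inverse_of I mulI (emb f) i -> f = e)
  (Hact : forall x y e, act (mulS x y) e = act x (act y e))
  (Hact_mul : forall x e f, act x (mulI e f) = mulI (act x e) (act x f))
  (Hplus_act : forall x y, act x (emb (plus y)) = emb (plus (mulS x y))) :
  let inW := fun w : I * S => Lrel I mulI (fst w) (emb (plus (snd w))) in
  let mulW := fun w v : I * S =>
      (mulI (fst w) (act (snd w) (fst v)), mulS (snd w) (snd v)) in
  closed_on (I * S) mulW inW /\
  assoc_on (I * S) mulW inW /\
  left_abundant_in (I * S) mulW inW /\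
  (forall w, inW w -> exists e, (inW e /\ idem (I * S) mulW e /\ Rstar_in (I * S) mulW inW w e) /\
      forall e', inW e' -> idem (I * S) mulW e' -> Rstar_in (I * S) mulW inW w e' -> e' = e).
Proof.
  intros inW mulW.
  destruct HS as [Sassoc [_ [_ Scomm]]].
  destruct HI as [Iassoc [Iidem Ilrb]].
  unfold is_semigroup in *. unfold idem in *.
  assert (Lchar : forall a b, Lrel I mulI a b <-> mulI a b = a /\ mulI b a = b).
  { intros a b; split.
    - intros [[u Hu] [v Hv]]; split.
      + destruct u as [u|]; simpl in Hu; subst a; [rewrite Iassoc, Iidem|]; auto.
      + destruct v as [v|]; simpl in Hv; subst b; [rewrite Iassoc, Iidem|]; auto.
    - intros [H1 H2]; split; [exists (Some a)|exists (Some b)]; simpl; auto. }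
  assert (plus_idem : forall e, mulS e e = e -> plus e = e).
  { intros e He. destruct (Hplus e) as [Hp HR].
    pose proof (proj1 (HR (Some e) None Logic.I Logic.I)) as A. simpl in A.
    pose proof (proj2 (HR (Some (plus e)) None Logic.I Logic.I)) as B. simpl in B.
    rewrite <- (A He). rewrite Scomm by auto. apply B; auto. }
  assert (plus_left : forall x, mulS (plus x) x = x).
  { intros x. destruct (Hplus x) as [Hp HR].
    apply (proj2 (HR (Some (plus x)) None Logic.I Logic.I)). simpl; auto. }
  assert (plus_mul : forall x y, mulS (plus (mulS x y)) (plus x) = plus (mulS x y)).
  { intros x y. destruct (Hplus (mulS x y)) as [Hp HR].
    pose proof (proj1 (HR (Some (plus x)) None Logic.I Logic.I)) as A. simpl in A.
    rewrite Scomm by (auto; apply Hplus). apply A.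
    rewrite <- Sassoc, plus_left. auto. }
  assert (Lsame : forall a b f, mulI a f = a -> mulI f a = f -> mulI b f = b ->
             mulI f b = f -> mulI a b = a).
  { intros a b f H1 H2 H3 H4. rewrite <- H1 at 1. rewrite Iassoc, H4. auto. }
  assert (act_L : forall x e, mulI e (emb (plus x)) = e -> mulI (emb (plus x)) e = emb (plus x) ->
     mulI (act (plus x) e) (emb (plus x)) = act (plus x) e /\
     mulI (emb (plus x)) (act (plus x) e) = emb (plus x)).
  { intros x e H1 H2.
    assert (E : act (plus x) (emb (plus x)) = emb (plus x)).
    { assert (px : mulS (plus x) (plus x) = plus x) by apply Hplus.
      rewrite Hplus_act, plus_left; auto. }
    split.
    - rewrite <- E at 1. rewrite <- Hact_mul, H1. auto.
    - rewrite <- E at 1. rewrite <- Hact_mul, H2. auto. }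
  assert (P4 : forall w, inW w -> exists e, (inW e /\ idem (I * S) mulW e /\ Rstar_in (I * S) mulW inW w e) /\
      forall e', inW e' -> idem (I * S) mulW e' -> Rstar_in (I * S) mulW inW w e' -> e' = e).
  { intros [e x] Hw. unfold inW in Hw. simpl in Hw. apply Lchar in Hw as [He1 He2].
    assert (px : mulS (plus x) (plus x) = plus x) by apply Hplus.
    assert (ppx : plus (plus x) = plus x) by auto.
    destruct (act_L x e He1 He2) as [Ha1 Ha2].
    assert (Hee : mulI e (act (plus x) e) = e) by (apply (Lsame _ _ _ He1 He2 Ha1 Ha2)).
    assert (R1 : Rstar_in (I * S) mulW inW (e, x) (e, plus x)).
    { intros u v _ _. pose proof (proj2 (Hplus x)) as Rx.
      destruct u as [[p s]|], v as [[q t]|]; simpl; unfold mulW; simpl.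
      - specialize (Rx (Some s) (Some t) Logic.I Logic.I); simpl in Rx.
        split; intro H; injection H; intros; f_equal; auto; apply Rx; auto.
      - specialize (Rx (Some s) None Logic.I Logic.I); simpl in Rx.
        split; intro H; injection H; intros; f_equal; auto; apply Rx; auto.
      - specialize (Rx None (Some t) Logic.I Logic.I); simpl in Rx.
        split; intro H; injection H; intros; f_equal; auto; apply Rx; auto.
      - tauto. }
    exists (e, plus x). split; [split; [|split]|].
    - unfold inW; simpl. rewrite ppx. apply Lchar; auto.
    - unfold mulW, idem; simpl. rewrite Hee, px. auto.
    - exact R1.
    - intros [g h] Hg Hid HR. unfold inW in Hg; simpl in Hg. unfold mulW in Hid; simpl in Hid.
      injection Hid; intros Hh Hgg.
      assert (R2 : forall u v, in1 (I*S) inW u -> in1 (I*S) inW v ->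
        (lmul1 (I*S) mulW u (e, plus x) = lmul1 (I*S) mulW v (e, plus x) <->
         lmul1 (I*S) mulW u (g, h) = lmul1 (I*S) mulW v (g, h))).
      { intros u v Hu Hv. rewrite <- (R1 u v Hu Hv). apply HR; auto. }
      assert (Hin : inW (e, plus x)) by (unfold inW; simpl; rewrite ppx; apply Lchar; auto).
      assert (Hin' : inW (g, h)) by (unfold inW; simpl; auto).
      pose proof (proj2 (R2 None (Some (g, h)) Logic.I Hin')) as A.
      simpl in A. unfold mulW in A; simpl in A.
      pose proof (proj1 (R2 None (Some (e, plus x)) Logic.I Hin)) as B.
      simpl in B. unfold mulW in B; simpl in B.
      rewrite Hee, px in B. specialize (B eq_refl).
      rewrite Hgg, Hh in A. specialize (A eq_refl).
      injection A; intros A2 A1. injection B; intros B2 B1.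
      assert (hx : h = plus x).
      { rewrite B2, Scomm by auto. auto. }
      subst h. rewrite ppx in Hg. apply Lchar in Hg as [Hg1 Hg2].
      rewrite A1. f_equal. symmetry. apply (Lsame _ _ _ Hg1 Hg2 Ha1 Ha2). }
  split; [|split; [|split]].
  - intros [e x] [g y] He Hg. unfold inW in *; simpl in *.
    apply Lchar in He as [He1 He2]. apply Lchar in Hg as [Hg1 Hg2]. apply Lchar.
    split.
    + rewrite <- Hplus_act, Iassoc, <- Hact_mul, Hg1. auto.
    + assert (Hc : mulI (emb (plus (mulS x y))) (emb (plus x)) = emb (plus (mulS x y))).
      { rewrite <- Hemb_hom by apply Hplus. rewrite plus_mul. auto. }
      assert (Hce : mulI (emb (plus (mulS x y))) e = emb (plus (mulS x y))).
      { rewrite <- Hc at 1. rewrite Iassoc, He2. auto. }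
      rewrite <- Iassoc, Hce, <- Hplus_act, <- Hact_mul, Hg2. auto.
  - intros [e x] [g y] [h z] _ _ _. unfold mulW; simpl. f_equal.
    + rewrite Hact_mul, Hact, Iassoc. auto.
    + apply Sassoc.
  - intros w Hw. destruct (P4 w Hw) as [e [[H1 [H2 H3]] _]]. exists e; auto.
  - exact P4.
Qed.
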